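(* Let $m>0$ and $\lambda<0$. Let $v_\lambda$ be the solution on $[m/2,\infty)$ of $$v''(r)+v(r)\Big(\frac{1}{4r^2}+\frac{m}{r^3}\Big(1+\frac{m}{2r}\Big)^{-2}+\lambda\Big(1+\frac{m}{2r}\Big)^4\Big)=0,\qquad v(m/2)=1,\ v'(m/2)=m^{-1}.$$ Then $v_\lambda$ has at most one zero in $[m/2,\infty)$. Equivalently, the solution $\gamma_\lambda=v_\lambda'/v_\lambda$ of the Riccati equation $$\gamma'+\gamma^2=-\frac{1}{4r^2}-\frac{m}{r^3}\Big(1+\frac{m}{2r}\Big)^{-2}-\lambda\Big(1+\frac{m}{2r}\Big)^4,\qquad \gamma(m/2)=m^{-1},$$ has at most one singularity (a point where it passes from $-\infty$ to $+\infty$). *)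

(* Defs.v *)
From Stdlib Require Import Reals.
Open Scope R_scope.

Definition potential (m lam r : R) : R :=
  / (4 * r ^ 2) + m / r ^ 3 * / (1 + m / (2 * r)) ^ 2 + lam * (1 + m / (2 * r)) ^ 4.

(* Main.v *)
Require Import Defs.
From Stdlib Require Import Reals Lra.
From Coquelicot Require Import Coquelicot.
Open Scope R_scope.

Lemma dmul f g x a b : derivable_pt_lim f x a -> derivable_pt_lim g x b ->
  derivable_pt_lim (fun t => f t * g t) x (a * g x + f x * b).
Proof. intros; apply (derivable_pt_lim_mult f g x a b); auto. Qed.
Lemma dminus f g x a b : derivable_pt_lim f x a -> derivable_pt_lim g x b ->
  derivable_pt_lim (fun t => f t - g t) x (a - b).
Proof. intros; apply (derivable_pt_lim_minus f g x a b); auto. Qed.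
Lemma dplus f g x a b : derivable_pt_lim f x a -> derivable_pt_lim g x b ->
  derivable_pt_lim (fun t => f t + g t) x (a + b).
Proof. intros; apply (derivable_pt_lim_plus f g x a b); auto. Qed.
Lemma dopp f x a : derivable_pt_lim f x a -> derivable_pt_lim (fun t => - f t) x (- a).
Proof. intros; apply (derivable_pt_lim_opp f x a); auto. Qed.
Lemma deq f x a b : derivable_pt_lim f x a -> a = b -> derivable_pt_lim f x b.
Proof. intros H e; subst; auto. Qed.
Lemma dcont f x a : derivable_pt_lim f x a -> continuity_pt f x.
Proof. intros H; apply derivable_continuous_pt; exists a; auto. Qed.

Lemma cont_pos f c : continuity_pt f c -> 0 < f c ->
  exists e, 0 < e /\ forall x, Rabs (x - c) < e -> 0 < f x.
Proof.
  intros H Hc. destruct (H (f c / 2)) as [al [Hal Hx]]; [lra|].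
  exists al; split; auto. intros x Hxc.
  destruct (Req_dec x c) as [->|Hne]; auto.
  assert (Hd := Hx x). simpl in Hd. unfold R_dist in Hd.
  assert (Rabs (f x - f c) < f c / 2).
  { apply Hd. split; auto. unfold D_x, no_cond; split; auto. }
  apply Rabs_def2 in H0. lra.
Qed.

Lemma first_zero f a b : a < b -> (forall x, a <= x <= b -> continuity_pt f x) ->
  (exists d, 0 < d /\ forall x, a < x < a + d -> 0 < f x) -> f b <= 0 ->
  exists c, a < c <= b /\ f c = 0 /\ forall x, a < x < c -> 0 < f x.
Proof.
  intros Hab Hc [d [Hd Hpos]] Hb.
  set (E := fun x => a <= x <= b /\ forall y, a < y <= x -> 0 < f y).
  assert (HB : bound E). { exists b. intros x [Hx _]. lra. }
  assert (HE : exists x, E x). { exists a. split. lra. intros; lra. }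
  destruct (completeness E HB HE) as [c [Hub Hlub]].
  assert (Hcb : c <= b). { apply Hlub. intros x [Hx _]; lra. }
  set (d' := Rmin (d/2) ((b-a)/2)).
  assert (Hd'1 : d' <= d/2) by apply Rmin_l.
  assert (Hd'2 : d' <= (b-a)/2) by apply Rmin_r.
  assert (Hd'0 : 0 < d') by (apply Rmin_pos; lra).
  assert (Hca : a + d' <= c).
  { apply Hub. split. lra. intros y Hy. apply Hpos. lra. }
  assert (P : forall x, a < x < c -> 0 < f x).
  { intros x Hx. destruct (Rlt_or_le 0 (f x)) as [h|h]; auto. exfalso.
    assert (c <= x). { apply Hlub. intros s [Hs1 Hs2].
      destruct (Rle_or_lt x s) as [h2|h2]. 
      - assert (0 < f x) by (apply Hs2; lra). lra.
      - lra. }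
    lra. }
  exists c. split; [lra|]. split; [|exact P].
  destruct (Rtotal_order (f c) 0) as [Hn|[Hz|Hp]]; auto; exfalso.
  - assert (Hc' : continuity_pt (fun x => - f x) c) by (apply continuity_pt_opp; apply Hc; lra).
    destruct (cont_pos _ _ Hc') as [e [He Hx]]; [lra|].
    set (x := Rmax ((a+c)/2) (c - e/2)).
    assert (Hx1 : (a+c)/2 <= x) by apply Rmax_l.
    assert (Hx2 : c - e/2 <= x) by apply Rmax_r.
    assert (Hx3 : x < c). { unfold x; apply Rmax_lub_lt; lra. }
    assert (0 < f x) by (apply P; lra).
    assert (0 < - f x). { apply Hx. rewrite Rabs_left; lra. }
    lra.
  - assert (Hcb' : c < b). { destruct Hcb as [h|h]; auto. subst c. lra. }
    destruct (cont_pos _ _ (Hc c ltac:(lra)) Hp) as [e [He Hx]].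
    set (x := c + Rmin (e/2) (b - c)).
    assert (Hm1 : Rmin (e/2) (b-c) <= e/2) by apply Rmin_l.
    assert (Hm2 : Rmin (e/2) (b-c) <= b - c) by apply Rmin_r.
    assert (Hm0 : 0 < Rmin (e/2) (b-c)) by (apply Rmin_pos; lra).
    assert (E x).
    { split. unfold x; lra. intros y Hy.
      destruct (Rlt_or_le y c) as [h|h]. apply P; lra.
      apply Hx. unfold x in Hy. rewrite Rabs_right; lra. }
    assert (x <= c) by (apply Hub; auto). unfold x in *; lra.
Qed.

Lemma left_nonpos f a l : derivable_pt_lim f a l -> f a = 0 ->
  (exists d, 0 < d /\ forall x, a - d < x < a -> 0 < f x) -> l <= 0.
Proof.
  intros H Ha [d [Hd Hx]]. destruct (Rle_or_lt l 0) as [h|h]; auto. exfalso.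
  destruct (H (l/2)) as [del Hdel]; [lra|].
  assert (Hdp := cond_pos del).
  set (h0 := - Rmin (del/2) (d/2)).
  assert (Hm1 : Rmin (del/2) (d/2) <= del/2) by apply Rmin_l.
  assert (Hm2 : Rmin (del/2) (d/2) <= d/2) by apply Rmin_r.
  assert (Hm0 : 0 < Rmin (del/2) (d/2)) by (apply Rmin_pos; lra).
  assert (Hq := Hdel h0 ltac:(unfold h0; lra) ltac:(unfold h0; rewrite Rabs_left; lra)).
  rewrite Ha in Hq. apply Rabs_def2 in Hq.
  assert (Hf : 0 < f (a + h0)) by (apply Hx; unfold h0; lra).
  assert (Hneg : (f (a + h0) - 0) / h0 < 0).
  { unfold Rdiv. rewrite Rminus_0_r. apply Rmult_pos_neg. lra. apply Rinv_lt_0_compat. unfold h0; lra. }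
  lra.
Qed.

Lemma right_neg f a l : derivable_pt_lim f a l -> f a = 0 -> l < 0 ->
  exists d, 0 < d /\ forall x, a < x < a + d -> f x < 0.
Proof.
  intros H Ha Hl. destruct (H (- l/2)) as [del Hdel]; [lra|].
  exists del. split. apply cond_pos. intros x Hx.
  assert (Hq := Hdel (x - a) ltac:(lra) ltac:(rewrite Rabs_right; lra)).
  replace (a + (x - a)) with x in Hq by ring.
  rewrite Ha, Rminus_0_r in Hq. apply Rabs_def2 in Hq.
  destruct (Rlt_or_le (f x) 0) as [h|h]; auto. exfalso.
  assert (0 <= f x / (x - a)). { unfold Rdiv. apply Rmult_le_pos; auto. left; apply Rinv_0_lt_compat; lra. }
  lra.
Qed.

Definition wf m r := sqrt r * (1 - ln(2*r/m) * ((2*r-m)/(2*r+m)) / 2).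
Definition w1 m r := (1 - ln(2*r/m)*((2*r-m)/(2*r+m))/2)/(2*sqrt r) - sqrt r * ((2*r-m)/(2*r+m)/r + 4*m*ln(2*r/m)/(2*r+m)^2)/2.
Definition hf m r := ln (2*r/m) * ((2*r-m)/(2*r+m)).

Ltac fin m r :=
  unfold Rdiv;
  let L := fresh "L" in set (L := ln (2 * r * / m));
  let s := fresh "s" in
  assert (Hs : 0 < sqrt r) by (apply sqrt_lt_R0; lra);
  assert (Hr : r = sqrt r * sqrt r) by (rewrite sqrt_sqrt; lra);
  set (s := sqrt r) in *; clearbody s L; subst r;
  field; repeat split; nra.
Lemma dw m r : 0 < m -> 0 < r -> derivable_pt_lim (wf m) r (w1 m r).
Proof. intros hm hr. apply is_derive_Reals. unfold wf, w1. auto_derive.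
repeat split; try apply Rmult_lt_0_compat; try apply Rinv_0_lt_compat; lra.
fin m r.
Qed.
Lemma dw1 m r : 0 < m -> 0 < r -> derivable_pt_lim (w1 m) r (- potential m 0 r * wf m r).
Proof. intros hm hr. apply is_derive_Reals. unfold wf, w1, potential. auto_derive.
assert (0 < sqrt r) by (apply sqrt_lt_R0; lra).
repeat split; try apply Rmult_lt_0_compat; try apply Rinv_0_lt_compat; nra.
fin m r.
Qed.

Lemma hf_mono m x y : 0 < m -> m/2 <= x -> x < y -> hf m x < hf m y.
Proof.
  intros hm hx hxy. unfold hf.
  assert (L0 : 0 <= ln (2*x/m)).
  { rewrite <- ln_1. apply ln_le. lra. apply (Rmult_le_reg_r m); [lra|].
    unfold Rdiv; rewrite Rmult_assoc, Rinv_l; lra. }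
  assert (L1 : ln (2*x/m) < ln (2*y/m)).
  { apply ln_increasing. unfold Rdiv; apply Rmult_lt_0_compat; [lra|apply Rinv_0_lt_compat; lra].
    unfold Rdiv; apply Rmult_lt_compat_r; [apply Rinv_0_lt_compat|]; lra. }
  assert (T0 : 0 <= (2*x-m)/(2*x+m)).
  { unfold Rdiv; apply Rmult_le_pos; [lra|left; apply Rinv_0_lt_compat; lra]. }
  assert (T1 : (2*x-m)/(2*x+m) < (2*y-m)/(2*y+m)).
  { replace ((2*x-m)/(2*x+m)) with (1 - 2*m * / (2*x+m)) by (field; lra).
    replace ((2*y-m)/(2*y+m)) with (1 - 2*m * / (2*y+m)) by (field; lra).
    assert (/ (2*y+m) < / (2*x+m)) by (apply Rinv_lt_contravar; nra).
    nra. }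
  nra.
Qed.

Lemma wf_eq m r : wf m r = sqrt r * (1 - hf m r / 2).
Proof. reflexivity. Qed.

Lemma pot_bounds m lam r : 0 < m -> lam < 0 -> m/2 <= r ->
  16*lam <= potential m lam r <= 9/m^2.
Proof.
  intros hm hl hr.
  set (p := m/(2*r)).
  assert (hp0 : 0 < p) by (unfold p, Rdiv; apply Rmult_lt_0_compat; [lra|apply Rinv_0_lt_compat; lra]).
  assert (hp1 : p <= 1).
  { unfold p. apply (Rmult_le_reg_r (2*r)); [lra|]. unfold Rdiv; rewrite Rmult_assoc, Rinv_l; lra. }
  assert (E : potential m lam r = (p^2 + 8*p^3/(1+p)^2)/m^2 + lam*(1+p)^4).
  { unfold potential, p. field. split; [|lra].
    intro h. assert (0 < m/(2*r)) by (unfold Rdiv; apply Rmult_lt_0_compat; [lra|apply Rinv_0_lt_compat; lra]). lra. }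
  rewrite E.
  assert (A0 : 0 <= 8*p^3/(1+p)^2).
  { unfold Rdiv; apply Rmult_le_pos. nra. left; apply Rinv_0_lt_compat; nra. }
  assert (A1 : 8*p^3/(1+p)^2 <= 8).
  { apply (Rmult_le_reg_r ((1+p)^2)); [nra|]. unfold Rdiv; rewrite Rmult_assoc, Rinv_l; [|nra]. nra. }
  assert (B0 : 0 < (1+p)^4) by (apply pow_lt; lra).
  assert (B1 : (1+p)^4 <= 16).
  { replace 16 with (2^4) by ring. apply pow_incr; lra. }
  assert (C : 0 <= (p^2 + 8*p^3/(1+p)^2)/m^2).
  { unfold Rdiv; apply Rmult_le_pos. nra. left; apply Rinv_0_lt_compat; nra. }
  assert (C2 : (p^2 + 8*p^3/(1+p)^2)/m^2 <= 9/m^2).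
  { unfold Rdiv; apply Rmult_le_compat_r. left; apply Rinv_0_lt_compat; nra. nra. }
  split; nra.
Qed.

Theorem mainTheorem8 (m lam : R) (v v' v'' : R -> R)
  (hm : 0 < m) (hlam : lam < 0)
  (hv : forall r, m / 2 <= r -> derivable_pt_lim v r (v' r))
  (hv' : forall r, m / 2 <= r -> derivable_pt_lim v' r (v'' r))
  (hode : forall r, m / 2 <= r -> v'' r + v r * potential m lam r = 0)
  (hinit0 : v (m / 2) = 1)
  (hinit1 : v' (m / 2) = / m) :
  forall r1 r2, m / 2 <= r1 -> m / 2 <= r2 -> v r1 = 0 -> v r2 = 0 -> r1 = r2.
Proof.
  assert (Huniq : forall a, m/2 <= a -> v a = 0 -> v' a = 0 -> False).
  { intros a ha va va'.
    destruct ha as [ha|ha]; [|subst a; lra].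
    set (K := 2 + 9/m^2 - 16*lam).
    set (G := fun r => (v r * v r + v' r * v' r) * exp (K*r)).
    set (G' := fun r => ((v' r * v r + v r * v' r) + (v'' r * v' r + v' r * v'' r)) * exp (K*r)
                 + (v r * v r + v' r * v' r) * (K * exp (K*r))).
    assert (HG : forall c, m/2 <= c <= a -> derivable_pt_lim G c (G' c)).
    { intros c hc. unfold G, G'. eapply deq.
      apply (dmul (fun r => v r * v r + v' r * v' r) (fun r => exp (K*r))).
      - apply dplus; apply dmul; first [apply hv; lra | apply hv'; lra].
      - apply is_derive_Reals. auto_derive; auto.
      - ring. }
    destruct (MVT_cor2 G G' (m/2) a ha HG) as [c [Hc1 Hc2]].
    assert (Ga : G a = 0) by (unfold G; rewrite va, va'; ring).
    assert (Gm : 0 < G (m/2)).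
    { unfold G. rewrite hinit0. apply Rmult_lt_0_compat; [nra|apply exp_pos]. }
    assert (Hneg : G' c < 0).
    { destruct (Rlt_or_le (G' c) 0) as [h|h]; auto. nra. }
    destruct (pot_bounds m lam c hm hlam ltac:(lra)) as [Q1 Q2].
    assert (Hv'' : v'' c = - v c * potential m lam c) by (pose proof (hode c ltac:(lra)); lra).
    assert (Hm2 : 0 < 9/m^2) by (unfold Rdiv; apply Rmult_lt_0_compat; [lra|apply Rinv_0_lt_compat; nra]).
    set (q := 1 - potential m lam c) in *.
    assert (X : 0 <= 2 * v c * v' c * q + K * (v c * v c + v' c * v' c)).
    { assert (K - q >= 0) by (unfold q, K; lra).
      assert (K + q >= 0) by (unfold q, K; lra).
      assert (0 <= (K + q) * ((v c + v' c) * (v c + v' c))) by (apply Rmult_le_pos; [lra|apply (Rle_0_sqr (v c + v' c))]).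
      assert (0 <= (K - q) * ((v c - v' c) * (v c - v' c))) by (apply Rmult_le_pos; [lra|apply (Rle_0_sqr (v c - v' c))]).
      nra. }
    assert (G' c = exp (K*c) * (2 * v c * v' c * q + K * (v c * v c + v' c * v' c))).
    { unfold G'. rewrite Hv''. unfold q. ring. }
    assert (0 <= G' c). { rewrite H. apply Rmult_le_pos; [left; apply exp_pos|exact X]. }
    lra. }
  set (W := fun r => wf m r * v' r - w1 m r * v r).
  set (W' := fun r => - lam * (1 + m/(2*r))^4 * wf m r * v r).
  assert (HW : forall c, m/2 <= c -> derivable_pt_lim W c (W' c)).
  { intros c hc. unfold W, W'. eapply deq.
    apply dminus; apply dmul; auto. apply dw; lra. apply dw1; lra.
    assert (Hv'' : v'' c = - v c * potential m lam c) by (pose proof (hode c hc); lra).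
    rewrite Hv''. unfold potential. ring. }
  assert (HWm : W (m/2) = 0).
  { unfold W, wf, w1. rewrite hinit0, hinit1.
    replace (2 * (m/2) / m) with 1 by (field; lra). rewrite ln_1.
    assert (Hs : 0 < sqrt (m/2)) by (apply sqrt_lt_R0; lra).
    assert (Hss : sqrt (m/2) * sqrt (m/2) = m/2) by (rewrite sqrt_sqrt; lra).
    replace (2 * (m/2) - m) with 0 by field.
    set (s := sqrt (m/2)) in *. clearbody s.
    replace m with (2 * (s*s)) by lra. field. lra. }
  assert (Hpsi : forall c, m/2 <= c -> 0 < (1 + m/(2*c))^4).
  { intros c hc. apply pow_lt.
    assert (0 < m/(2*c)) by (unfold Rdiv; apply Rmult_lt_0_compat; [lra|apply Rinv_0_lt_compat; lra]). lra. }
  assert (Hsq : forall c, m/2 <= c -> 0 < sqrt c) by (intros; apply sqrt_lt_R0; lra).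
  assert (Main : forall r1 r2, m/2 <= r1 -> r1 < r2 -> v r1 = 0 -> v r2 = 0 -> False).
  { intros r1 r2 h1 h12 z1 z2.
    assert (h1' : m/2 < r1). { destruct h1 as [h|h]; auto. subst r1. lra. }
    destruct (first_zero v (m/2) r1 h1') as [a [Ha [za Hpa]]].
    - intros x hx. eapply dcont. apply hv. lra.
    - destruct (cont_pos v (m/2) (dcont _ _ _ (hv (m/2) ltac:(lra)))) as [e [He Hx]]; [lra|].
      exists e. split; auto. intros x hx. apply Hx. rewrite Rabs_right; lra.
    - lra.
    - assert (Hva : v' a <= 0).
      { apply (left_nonpos v a). apply hv; lra. auto. exists (a - m/2). split. lra.
        intros x hx. apply Hpa. lra. }
      assert (Hva' : v' a < 0).
      { destruct Hva as [h|h]; auto. exfalso. apply (Huniq a); auto; lra. }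
      assert (Hha : 2 < hf m a).
      { destruct (Rlt_or_le 2 (hf m a)) as [h|h]; auto. exfalso.
        destruct (MVT_cor2 W W' (m/2) a ltac:(lra) ltac:(intros c hc; apply HW; lra)) as [c [Hc1 Hc2]].
        assert (hc2 : hf m c < 2) by (pose proof (hf_mono m c a hm ltac:(lra) ltac:(lra)); lra).
        assert (0 < wf m c). { rewrite wf_eq. apply Rmult_lt_0_compat. apply Hsq; lra. lra. }
        assert (0 < v c) by (apply Hpa; lra).
        assert (0 < W' c).
        { unfold W'. pose proof (Hpsi c ltac:(lra)).
          assert (0 < -lam * (1 + m/(2*c))^4) by nra. 
          assert (0 < wf m c * v c) by nra. nra. }
        assert (0 <= wf m a). { rewrite wf_eq. apply Rmult_le_pos. left; apply Hsq; lra. lra. }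
        assert (W a <= 0). { unfold W. rewrite za. nra. }
        nra. }
      destruct (right_neg v a (v' a) (hv a ltac:(lra)) za Hva') as [d [Hd Hneg]].
      destruct (first_zero (fun x => - v x) a r2 ltac:(lra)) as [b [Hb [zb Hpb]]].
      + intros x hx. apply continuity_pt_opp. eapply dcont. apply hv. lra.
      + exists d. split; auto. intros x hx. pose proof (Hneg x hx). lra.
      + lra.
      + assert (Hvb : - v' b <= 0).
        { apply (left_nonpos (fun x => - v x) b). apply dopp. apply hv; lra. lra.
          exists (b - a). split. lra. intros x hx. apply Hpb. lra. }
        destruct (MVT_cor2 W W' a b ltac:(lra) ltac:(intros c hc; apply HW; lra)) as [c [Hc1 Hc2]].
        assert (hc2 : 2 < hf m c) by (pose proof (hf_mono m a c hm ltac:(lra) ltac:(lra)); lra).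
        assert (hb2 : 2 < hf m b) by (pose proof (hf_mono m a b hm ltac:(lra) ltac:(lra)); lra).
        assert (wf m c < 0). { rewrite wf_eq. assert (0 < sqrt c) by (apply Hsq; lra). nra. }
        assert (wf m b < 0). { rewrite wf_eq. assert (0 < sqrt b) by (apply Hsq; lra). nra. }
        assert (wf m a < 0). { rewrite wf_eq. assert (0 < sqrt a) by (apply Hsq; lra). nra. }
        assert (v c < 0) by (pose proof (Hpb c ltac:(lra)); lra).
        assert (0 < W' c).
        { unfold W'. pose proof (Hpsi c ltac:(lra)).
          assert (0 < -lam * (1 + m/(2*c))^4) by nra.
          assert (0 < wf m c * v c) by nra. nra. }
        assert (0 < W a). { unfold W. rewrite za. nra. }
        assert (W b <= 0). { unfold W. assert (v b = 0) by lra. rewrite H5. nra. }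
        nra. }
  intros r1 r2 h1 h2 z1 z2.
  destruct (Rtotal_order r1 r2) as [h|[h|h]]; auto; exfalso.
  - exact (Main r1 r2 h1 h z1 z2).
  - exact (Main r2 r1 h2 h z2 z1).
Qed.
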